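(* Let $M=(W,\bm{\Box},V)$ be a monotonic and transitive neighborhood model, $\Sigma$ a set of formulas closed under subformulas, and $M^{T}_f$ the transitive filtration of $M$ through $\Sigma$. Then its supplementation $M^{T\#}_f=(W_f,\bm{\Box}^{T\#}_f,V_f)$ is a filtration of $M$ through $\Sigma$, i.e. $\bm{\Box}^{T\#}_f\widetilde{|\varphi|}_M=\widetilde{|\Box\varphi|}_M$ for every formula $\Box\varphi\in\Sigma$.
   Context: A neighborhood model is $M=(W,\bm{\Box},V)$ with $W\neq\varnothing$, $\bm{\Box}:\mathcal P(W)\to\mathcal P(W)$, $V:Var\to\mathcal P(W)$; truth sets: $|p|_M=V(p)$, $|\neg\varphi|_M=W\setminus|\varphi|_M$, $|\varphi\wedge\psi|_M=|\varphi|_M\cap|\psi|_M$, $|\Box\varphi|_M=\bm{\Box}|\varphi|_M$. $M$ is transitive if $\bm{\Box}X\subseteq\bm{\Box}\bm{\Box}X$ for all $X$, monotonic if $X\subseteq Y$ implies $\bm{\Box}X\subseteq\bm{\Box}Y$. For $\Sigma$ closed under subformulas, $w\sim v$ iff $w,v$ satisfy the same formulas of $\Sigma$; $\widetilde w$ is the class of $w$, $W_f=\{\widetilde w:w\in W\}$, $\widetilde X=\{\widetilde w:w\in X\}$, $V_f(p)=\widetilde{|p|}_M$. A filtration of $M$ through $\Sigma$ is a model $(W_f,\bm{\Box}_f,V_f)$ with $\bm{\Box}_f\widetilde{|\varphi|}_M=\widetilde{|\Box\varphi|}_M$ whenever $\Box\varphi\in\Sigma$. The minimal filtration has $\bm{\Box}^{-}_fX=\widetilde{|\Box\varphi|}_M$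 if $X=\widetilde{|\varphi|}_M$ for some formula $\Box\varphi\in\Sigma$, and $\varnothing$ otherwise. For a function $\bm{\Box}':\mathcal P(U)\to\mathcal P(U)$, $\widehat{\bm{\Box}'}X=X$ if $X=\bm{\Box}'Y$ for some $Y$, and $\varnothing$ otherwise. The transitive filtration has $\bm{\Box}^{T}_fX=\bm{\Box}^{-}_fX\cup\widehat{\bm{\Box}^{-}_f}X$. The supplementation of a function $\bm{\Box}'$ is $\bm{\Box}'^{\#}X=\bigcup\{\bm{\Box}'Y:Y\subseteq X\}$; $\bm{\Box}^{T\#}_f$ denotes the supplementation of $\bm{\Box}^{T}_f$. *)

(* Defs.v *)
Set Implicit Arguments.

Inductive form : Type :=
| Var : nat -> form
| Neg : form -> form
| And : form -> form -> form
| Box : form -> form.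

Record nbhd_model := NbhdModel {
  W : Type;
  nbox : (W -> Prop) -> (W -> Prop);
  val : nat -> (W -> Prop);
  W_nonempty : inhabited W }.

Definition subset {T : Type} (X Y : T -> Prop) : Prop := forall x, X x -> Y x.

Definition monotonic (M : nbhd_model) : Prop :=
  forall X Y : W M -> Prop, subset X Y -> subset (nbox M X) (nbox M Y).

Definition transitive (M : nbhd_model) : Prop :=
  forall X : W M -> Prop, subset (nbox M X) (nbox M (nbox M X)).

Fixpoint truth (M : nbhd_model) (phi : form) : W M -> Prop :=
  match phi with
  | Var p => val M p
  | Neg a => fun w => ~ truth M a w
  | And a b => fun w => truth M a w /\ truth M b w
  | Box a => nbox M (truth M a)
  end.

Definition subformula_closed (Sigma : form -> Prop) : Prop :=
  (forall a, Sigma (Neg a) -> Sigma a) /\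
  (forall a b, Sigma (And a b) -> Sigma a /\ Sigma b) /\
  (forall a, Sigma (Box a) -> Sigma a).

Section Filtration.
Variables (M : nbhd_model) (Sigma : form -> Prop).

Definition sim (w v : W M) : Prop :=
  forall phi, Sigma phi -> (truth M phi w <-> truth M phi v).

Definition cls (w : W M) : W M -> Prop := sim w.

Definition Wf : Type := { C : W M -> Prop | exists w, C = cls w }.

Definition tilde (X : W M -> Prop) : Wf -> Prop :=
  fun c => exists w, X w /\ proj1_sig c = cls w.

Definition Vf (p : nat) : Wf -> Prop := tilde (val M p).

(* minimal filtration: Box^-_f X = |Box phi|~ if X = |phi|~ for some Box phi in
   Sigma, empty otherwise (the value does not depend on the choice of phi). *)
Definition boxMin (X : Wf -> Prop) : Wf -> Prop :=
  fun c => exists phi, Sigma (Box phi) /\ X = tilde (truth M phi) /\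
                       tilde (truth M (Box phi)) c.

(* a filtration of M through Sigma (valuation V_f fixed as above) *)
Definition is_filtration (bf : (Wf -> Prop) -> (Wf -> Prop)) : Prop :=
  forall phi, Sigma (Box phi) -> bf (tilde (truth M phi)) = tilde (truth M (Box phi)).

End Filtration.

Definition hat {U : Type} (B' : (U -> Prop) -> (U -> Prop)) (X : U -> Prop) : U -> Prop :=
  fun u => (exists Y, X = B' Y) /\ X u.

Definition supplementation {U : Type} (B' : (U -> Prop) -> (U -> Prop)) (X : U -> Prop)
  : U -> Prop :=
  fun u => exists Y, subset Y X /\ B' Y u.

Definition boxT (M : nbhd_model) (Sigma : form -> Prop) (X : Wf M Sigma -> Prop)
  : Wf M Sigma -> Prop :=
  fun c => @boxMin M Sigma X c \/ hat (@boxMin M Sigma) X c.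

(* Main.v *)
Require Import Defs.
From Stdlib Require Import FunctionalExtensionality PropExtensionality.

Lemma key (M : nbhd_model) (Sigma : form -> Prop) a b :
  Sigma a -> Sigma b ->
  subset (@tilde M Sigma (truth M a)) (@tilde M Sigma (truth M b)) ->
  subset (truth M a) (truth M b).
Proof.
  intros Ha Hb Hs w Hw.
  set (c := exist (fun C => exists w0, C = @cls M Sigma w0) (@cls M Sigma w)
                  (ex_intro _ w eq_refl) : @Wf M Sigma).
  destruct (Hs c (ex_intro _ w (conj Hw eq_refl))) as [v [Hv Heq]].
  simpl in Heq.
  assert (Hww : @cls M Sigma w w) by (intros phi _; tauto).
  rewrite Heq in Hww.
  exact (proj1 (Hww b Hb) Hv).
Qed.

Theorem mainTheorem8 (M : nbhd_model) (Sigma : form -> Prop) :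
  monotonic M -> transitive M -> subformula_closed Sigma ->
  @is_filtration M Sigma (supplementation (@boxT M Sigma)).
Proof.
  intros Hmon Htr [_ [_ Hsb]] phi Hphi.
  apply functional_extensionality; intro u.
  apply propositional_extensionality; split.
  - intros [Y [HY [H1 | [[Z HZ] Hu]]]].
    + destruct H1 as [psi [Hpsi [HYe [w [Hw Hu]]]]].
      subst Y.
      pose proof (key M Sigma psi phi (Hsb _ Hpsi) (Hsb _ Hphi) HY) as Hk.
      exists w; split; [ | exact Hu].
      exact (Hmon _ _ Hk w Hw).
    + pose proof Hu as Hu'.
      rewrite HZ in Hu'.
      destruct Hu' as [chi [Hchi [HZe Hu2]]].
      subst Z.
      assert (Hsub : subset (@tilde M Sigma (truth M (Box chi)))
                            (@tilde M Sigma (truth M phi))).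
      { intros c Hc. apply HY. rewrite HZ. exists chi. auto. }
      pose proof (key M Sigma (Box chi) phi Hchi (Hsb _ Hphi) Hsub) as Hk.
      destruct Hu2 as [w [Hw Hue]].
      exists w; split; [ | exact Hue].
      apply (Hmon _ _ Hk). apply Htr. exact Hw.
  - intros Hu. exists (@tilde M Sigma (truth M phi)).
    split; [intros x Hx; exact Hx |].
    left. exists phi. auto.
Qed.
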